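(* Let $L$ be a Leibniz algebra over $F$ and $(l,r,V)$ a representation of $L$. Let $A$ be a subspace of $L$ for which there exists an integer $n\ge1$ with $(r_A)^n=\{0\}$, and let $x\in n_L(A)$ be such that $r_x$ is nilpotent. Then there exists an integer $N\ge1$ with $(r_{A+Fx})^N=\{0\}$.
   Context: $F$ is an algebraically closed field of characteristic zero; all spaces are finite-dimensional. A (right) Leibniz algebra is a vector space $L$ with bilinear bracket satisfying $[x,[y,z]]=[[x,y],z]-[[x,z],y]$. A representation $(l,r,V)$ of $L$ is a vector space $V$ with linear maps $l,r:L\to\mathrm{End}_F(V)$ such that $r_{[x,y]}=r_yr_x-r_xr_y$, $l_{[x,y]}=r_yl_x-l_xr_y$, $l_{[x,y]}=r_yl_x+l_xl_y$ (products are compositions). For a subspace $B\subseteq L$, $r_B=\{r_b:b\in B\}$ and $(r_B)^p$ is the span of all compositions $r_{b_1}\cdots r_{b_p}$ with $b_i\in B$. $n_L(A)=\{y\in L:[y,a]\in A\text{ and }[a,y]\in A\ \forall a\in A\}$. *)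

(* Defs.v *)
From HB Require Import structures.
From mathcomp Require Import all_boot all_order all_algebra.
Set Implicit Arguments. Unset Strict Implicit. Unset Printing Implicit Defensive.
Import GRing.Theory.
Local Open Scope ring_scope.

Definition leibniz_bracket (F : fieldType) (L : vectType F) (br : L -> L -> L) :=
  [/\ forall (a : F) (x y z : L), br (a *: x + y) z = a *: br x z + br y z,
      forall (a : F) (x y z : L), br z (a *: x + y) = a *: br z x + br z y
    & forall x y z : L, br x (br y z) = br (br x y) z - br (br x z) y].

Definition leibniz_rep (F : fieldType) (L : vectType F) (br : L -> L -> L)
    (V : vectType F) (l r : {linear L -> 'End(V)}) :=
  [/\ forall x y : L, r (br x y) = (r y \o r x - r x \o r y)%VF,
      forall x y : L, l (br x y) = (r y \o l x - l x \o r y)%VF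
    & forall x y : L, l (br x y) = (r y \o l x + l x \o l y)%VF].

Definition rcomp (F : fieldType) (L V : vectType F) (r : L -> 'End(V))
    (bs : seq L) : 'End(V) :=
  foldr (fun b f => (r b \o f)%VF) \1%VF bs.

(* (r_B)^p = {0}: the span of all compositions r_{b_1}...r_{b_p}, b_i in B,
   is zero, i.e. each such composition is zero. *)
Definition rpow_zero (F : fieldType) (L V : vectType F) (r : L -> 'End(V))
    (B : {vspace L}) (p : nat) : Prop :=
  forall bs : p.-tuple L, all (fun b => b \in B) bs -> rcomp r bs = 0.

Definition normalizer (F : fieldType) (L : vectType F) (br : L -> L -> L)
    (A : {vspace L}) (y : L) : Prop :=
  forall a : L, a \in A -> br y a \in A /\ br a y \in A.

Definition nilpotentVF (F : fieldType) (V : vectType F) (f : 'End(V)) : Prop :=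
  exists k : nat, iter k (fun g => (f \o g)%VF) \1%VF = 0.

(* Main.v *)
Require Import Defs.
From HB Require Import structures.
From mathcomp Require Import all_boot all_order all_algebra.
From mathcomp Require Import zify.
Import GRing.Theory.
Local Open Scope ring_scope.
Set Implicit Arguments. Unset Strict Implicit.

Fixpoint Usp (F : fieldType) (L V : vectType F) (r : L -> 'End(V))
   (A : {vspace L}) (j : nat) : {vspace V} :=
  if j is j'.+1 then (\sum_(i < \dim A) (r (vbasis A)`_i @: @Usp F L V r A j'))%VS
  else fullv.
Arguments Usp {F L V}.

Lemma Usp_r (F : fieldType) (L V : vectType F) (r : {linear L -> 'End(V)})
  (A : {vspace L}) j (a : L) (u : V) :
  a \in A -> u \in Usp r A j -> r a u \in Usp r A j.+1.
Proof.
move=> aA uU; rewrite [a](coord_vbasis aA) raddf_sum /= sum_lfunE.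
apply: memv_suml => i _; rewrite linearZ /= scale_lfunE; apply: memvZ.
apply: (subvP (sumv_sup i (P := xpredT) (Vs := fun i : 'I_(\dim A) => (r (vbasis A)`_i @: Usp r A j)%VS) _ (subvv _))) => //.
exact: memv_img.
Qed.

Lemma Usp_mono (F : fieldType) (L V : vectType F) (r : {linear L -> 'End(V)})
  (A : {vspace L}) j : (Usp r A j.+1 <= Usp r A j)%VS.
Proof.
elim: j => [|j IH]; first exact: subvf.
apply/subv_sumP => i _ /=.
apply: (subv_trans (limgS _ IH)).
exact: (sumv_sup i (P := xpredT) (Vs := fun i : 'I_(\dim A) => (r (vbasis A)`_i @: Usp r A j)%VS)).
Qed.

Lemma basis_in (F : fieldType) (L : vectType F) (A : {vspace L}) (i : 'I_(\dim A)) :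
  (vbasis A)`_i \in A.
Proof. apply: vbasis_mem; apply: mem_nth; by rewrite size_tuple. Qed.

Lemma Usp_T (F : fieldType) (L V : vectType F) (br : L -> L -> L)
  (r : {linear L -> 'End(V)}) (A : {vspace L}) (x : L)
  (h1 : forall (b : L) (w : V), r x (r b w) = - r (br x b) w)
  (hx : forall a, a \in A -> br x a \in A) j (u : V) :
  u \in Usp r A j -> r x u \in Usp r A j.
Proof.
case: j => [|j]; first by move=> _; rewrite /= memvf.
move=> /memv_sumP [vs Hvs ->]; rewrite raddf_sum; apply: memv_suml => i _.
have /memv_imgP [w wU ->] := Hvs i isT.
suff H : r x (r (vbasis A)`_i w) \in Usp r A j.+1 by exact: H.
rewrite h1 -opp_lfunE -linearN; apply: Usp_r => //.
by rewrite memvN; apply: hx; apply: basis_in.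
Qed.

Lemma rcomp_rcons (F : fieldType) (L V : vectType F) (r : L -> 'End(V)) bs b (v : V) :
  rcomp r (rcons bs b) v = rcomp r bs (r b v).
Proof. by elim: bs => [|c bs IH] /=; rewrite ?comp_lfunE ?id_lfunE // IH. Qed.

Lemma Usp_zero (F : fieldType) (L V : vectType F)
  (r : {linear L -> 'End(V)}) (A : {vspace L}) n (hA : rpow_zero r A n) j :
  forall (bs : seq L) (u : V), all (fun b => b \in A) bs -> (j + size bs = n)%N ->
  u \in Usp r A j -> rcomp r bs u = 0.
Proof.
elim: j => [|j IH] bs u hbs hs.
  move=> _; have := hA (Tuple (introT eqP hs)) hbs; move=> /= ->.
  by rewrite zero_lfunE.
move=> /memv_sumP [vs Hvs ->]; rewrite raddf_sum; apply: big1 => i _.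
have /memv_imgP [w wU ->] := Hvs i isT.
suff H : rcomp r bs (r (vbasis A)`_i w) = 0 by exact: H.
rewrite -rcomp_rcons; apply: IH => //.
  by rewrite all_rcons basis_in hbs.
by rewrite size_rcons -hs addnS addSn.
Qed.

Definition Tpow (F : fieldType) (V : vectType F) (f : 'End(V)) (s : nat) : 'End(V) :=
  iter s (fun g => (f \o g)%VF) \1%VF.
Arguments Tpow {F V}.

Lemma TpowS (F : fieldType) (V : vectType F) (f : 'End(V)) s (u : V) :
  Tpow f s.+1 u = f (Tpow f s u).
Proof. by rewrite /Tpow /= comp_lfunE. Qed.

Lemma step_eq (F : fieldType) (L V : vectType F) (r : {linear L -> 'End(V)})
  (a x : L) (c : F) s (u w : V) :
  r (a + c *: x) (Tpow (r x) s u + w) =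
  c *: Tpow (r x) s.+1 u + (r a (Tpow (r x) s u) + r a w + c *: r x w).
Proof.
rewrite [r (a + _)]linearD [r (_ *: x)]linearZ /= add_lfunE scale_lfunE TpowS.
rewrite !linearD /=.
by rewrite [LHS]addrCA.
Qed.

Lemma zmod_aux (M : zmodType) (P Q : M) :
  P - Q + (P - Q) = P + P + (P + P) + (- Q - Q) -> P + P = 0.
Proof.
have e' : P+P+(P+P) + (- Q - Q) = P + P + (P - Q + (P - Q)).
  rewrite -addrA.
  by rewrite [P + P + (- Q - Q)]addrACA.
by rewrite e' => e; apply: (addIr (P - Q + (P - Q))); rewrite add0r -e.
Qed.

Lemma rr_eq (F : fieldType) (hF : [pchar F] =i pred0) (L V : vectType F)
  (br : L -> L -> L) (hL : leibniz_bracket br) (l r : {linear L -> 'End(V)})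
  (hrep : leibniz_rep br l r) (p q : L) (w : V) :
  r p (r q w) = - r (br p q) w.
Proof.
case: hL => _ hL2 _; case: hrep => h1 _ _.
have e1 := congr1 (fun f : 'End(V) => f w) (h1 p q).
have e2 := congr1 (fun f : 'End(V) => f w) (h1 p (q + q)).
have hb : br p (q + q) = br p q + br p q by have := hL2 1 q q p; rewrite !scale1r.
rewrite /= hb in e2.
rewrite !(comp_lfunE, add_lfunE, opp_lfunE, linearD) /= in e2.
rewrite /= !(comp_lfunE, add_lfunE, opp_lfunE) in e1.
rewrite e1 in e2.
have PP := @zmod_aux V _ _ e2.
have P0 : r q (r p (r q w)) = 0.
  have : (2%:R : F) *: r q (r p (r q w)) = 0 by rewrite scaler_nat mulr2n.
  move/eqP; rewrite scaler_eq0 => /orP [|/eqP //].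
  by rewrite ((pcharf0P F).1 hF 2).
by rewrite e1 P0 sub0r opprK.
Qed.

Lemma Tpow_U (F : fieldType) (L V : vectType F) (br : L -> L -> L)
  (r : {linear L -> 'End(V)}) (A : {vspace L}) (x : L)
  (h1 : forall (b : L) (w : V), r x (r b w) = - r (br x b) w)
  (hx : forall a, a \in A -> br x a \in A) j s (u : V) :
  u \in Usp r A j -> Tpow (r x) s u \in Usp r A j.
Proof.
move=> uU; elim: s => [|s IH]; first by rewrite /Tpow /= id_lfunE.
by rewrite TpowS; apply: Usp_T IH.
Qed.

Definition Wsp (F : fieldType) (L V : vectType F) (r : L -> 'End(V))
   (A : {vspace L}) (x : L) (j s : nat) : {vspace V} :=
  (Tpow (r x) s @: Usp r A j + Usp r A j.+1)%VS.
Arguments Wsp {F L V}.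

Lemma W_step (F : fieldType) (L V : vectType F) (br : L -> L -> L)
  (r : {linear L -> 'End(V)}) (A : {vspace L}) (x : L)
  (h1 : forall (b : L) (w : V), r x (r b w) = - r (br x b) w)
  (hx : forall a, a \in A -> br x a \in A) j s (y : L) (v : V) :
  y \in (A + <[x]>)%VS -> v \in Wsp r A x j s -> r y v \in Wsp r A x j s.+1.
Proof.
move=> /memv_addP [a aA [z /vlineP [c ->] ->]].
move=> /memv_addP [v1 /memv_imgP [u uU ->] [w wU ->]].
rewrite step_eq; apply: memvD.
  apply: memvZ; apply: (subvP (addvSl _ _)); exact: memv_img.
apply: (subvP (addvSr _ _)); apply: memvD; last first.
  by apply: memvZ; apply: Usp_T wU.
apply: memvD; apply: Usp_r => //.
  exact: Tpow_U uU.
exact: (subvP (Usp_mono r A j)) wU.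
Qed.

Lemma descend (F : fieldType) (L V : vectType F) (br : L -> L -> L)
  (r : {linear L -> 'End(V)}) (A : {vspace L}) (x : L)
  (h1 : forall (b : L) (w : V), r x (r b w) = - r (br x b) w)
  (hx : forall a, a \in A -> br x a \in A) k (hk : (0 < k)%N)
  (hT : Tpow (r x) k = 0) (bs : seq L) :
  all (fun b => b \in (A + <[x]>)%VS) bs ->
  forall j s (v : V), (s <= k)%N -> v \in Wsp r A x j s ->
  exists j' s', [/\ (s' <= k)%N, (j * k + s + size bs <= j' * k + s')%N &
                   rcomp r bs v \in Wsp r A x j' s'].
Proof.
elim: bs => [|b bs IH] /=.
  move=> _ j s v hs hv; exists j, s; split => //; first by rewrite addn0.
  by rewrite id_lfunE.
move=> /andP [hb hbs] j s v hs hv.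
have [j' [s' [hs' hle hW]]] := IH hbs j s v hs hv.
rewrite comp_lfunE.
case: (ltnP s' k) => hsk.
  exists j', s'.+1; split => //.
    by rewrite addnS addnS ltnS.
  exact: W_step.
have hsk' : s' = k by apply/eqP; rewrite eqn_leq hs' hsk.
subst s'.
have hW' : rcomp r bs v \in Wsp r A x j'.+1 0.
  move: hW => /memv_addP [v1 /memv_imgP [u uU ->] [w wU ->]].
  rewrite hT zero_lfunE add0r.
  apply: (subvP (addvSl _ _)); apply/memv_imgP; exists w => //.
  by rewrite /Tpow /= id_lfunE.
exists j'.+1, 1%N; split => //.
  rewrite mulSn; move: hle; rewrite addnS; nia.
exact: W_step.
Qed.

Lemma Usp_monoN (F : fieldType) (L V : vectType F) (r : {linear L -> 'End(V)})
  (A : {vspace L}) j d : (Usp r A (j + d) <= Usp r A j)%VS.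
Proof.
elim: d => [|d IH]; first by rewrite addn0 subvv.
by rewrite addnS; apply: subv_trans IH; apply: Usp_mono.
Qed.

Unset Implicit Arguments.

Theorem lemma4p1 (F : closedFieldType) (hF : [pchar F] =i pred0)
  (L : vectType F) (br : L -> L -> L) (hL : leibniz_bracket br)
  (V : vectType F) (l r : {linear L -> 'End(V)}) (hrep : leibniz_rep br l r)
  (A : {vspace L}) (n : nat) (hn : (0 < n)%N) (hA : rpow_zero r A n)
  (x : L) (hx : normalizer br A x) (hrx : nilpotentVF (r x)) :
  exists N : nat, (0 < N)%N /\ rpow_zero r (A + <[x]>)%VS N.
Proof.
have h1 : forall (b : L) (w : V), r x (r b w) = - r (br x b) w.
  by move=> b w; apply: (rr_eq hF hL hrep).
have hx' : forall a, a \in A -> br x a \in A by move=> a ha; case: (hx a ha).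
case: hrx => k0 hk0.
have hT : Tpow (r x) k0.+1 = 0.
  by rewrite /Tpow /=; rewrite /= in hk0; rewrite hk0 comp_lfun0r.
have Uz : forall u, u \in Usp r A n -> u = 0.
  move=> u hu; have := Usp_zero hA (bs := [::]) isT (addn0 n) hu.
  by rewrite /= id_lfunE.
exists (n * k0.+1)%N; split; first by rewrite muln_gt0 hn.
move=> bs hbs; apply/lfunP => v; rewrite zero_lfunE.
have hv : v \in Wsp r A x 0 0.
  apply: (subvP (addvSl _ _)); apply/memv_imgP; exists v; first exact: memvf.
  by rewrite /Tpow /= id_lfunE.
have [j' [s' [hs' hle hW]]] := descend h1 hx' (ltn0Sn k0) hT hbs (leq0n _) hv.
rewrite size_tuple /= in hle.
move: hW => /memv_addP [v1 /memv_imgP [u uU ->] [w wU ->]].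
case: (leqP n j') => hnj.
  have hu : u = 0.
    apply: Uz; apply: (subvP (Usp_monoN r A n (j' - n))).
    by rewrite subnKC.
  have hw : w = 0.
    apply: Uz; apply: (subvP (Usp_monoN r A n (j'.+1 - n))).
    by rewrite subnKC // ltnW.
  by rewrite hu hw linear0 addr0.
have [e1 e2] : j'.+1 = n /\ s' = k0.+1 by split; nia.
subst s'; rewrite hT zero_lfunE add0r; apply: Uz; by rewrite -e1.
Qed.
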